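(* Let $\tau>1$ and consider two candidates $P,Q$. Weighted Majority Rule 2 (defined in the context) has distortion at most $\max\big\{\frac{3\tau-1}{\tau+1},\frac{\tau+2}{\tau}\big\}$; i.e., if it selects $P$ then $SC(P)\le \max\{\frac{3\tau-1}{\tau+1},\frac{\tau+2}{\tau}\}\,SC(Q)$.
   Context: Voters $N=\{1,\dots,n\}$ and candidates are points of an arbitrary metric space $(X,d)$. Voter $i$ prefers $P$ to $Q$ only if $d(i,P)\le d(i,Q)$, with preference strength $\alpha_i^{PQ}=d(i,Q)/d(i,P)\ge1$. $SC(Y)=\sum_{i\in N}d(i,Y)$. For two candidates and threshold $\tau$, the information available is every voter's preferred candidate and whether its preference strength is $>\tau$ (strong) or $\le\tau$ (weak). Let $A_2,A_1$ be the voters preferring $P$ with strong, resp. weak, preference, and $B_2,B_1$ likewise for $Q$. Weighted Majority Rule 2: give weight $\frac{\tau+1}{\tau-1}$ to each strong voter and weight $1$ to each weak voter, and select $P$ if $\frac{\tau+1}{\tau-1}|A_2|+|A_1|\ge|B_1|+\frac{\tau+1}{\tau-1}|B_2|$, otherwise $Q$. *)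

(* Defs.v *)
From Stdlib Require Import Reals.
Open Scope R_scope.

Record metric (X : Type) (d : X -> X -> R) : Prop := {
  metric_nonneg : forall x y, 0 <= d x y;
  metric_refl   : forall x, d x x = 0;
  metric_sep    : forall x y, d x y = 0 -> x = y;
  metric_sym    : forall x y, d x y = d y x;
  metric_tri    : forall x y z, d x z <= d x y + d y z
}.

Fixpoint rsum (n : nat) (f : nat -> R) : R :=
  match n with
  | O => 0
  | S k => rsum k f + f k
  end.

(* social cost SC(Y) = sum_i d(i, Y); voter i is located at v i *)
Definition SC {X : Type} (d : X -> X -> R) (n : nat) (v : nat -> X) (Y : X) : R :=
  rsum n (fun i => d (v i) Y).

(* Preference profile consistency: prefP i = true means voter i prefers P,
   false means it prefers Q; a voter prefers P to Q only if d(i,P) <= d(i,Q). *)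
Definition consistent {X : Type} (d : X -> X -> R) (n : nat) (v : nat -> X)
  (P Q : X) (prefP : nat -> bool) : Prop :=
  forall i, (i < n)%nat ->
    (prefP i = true -> d (v i) P <= d (v i) Q) /\
    (prefP i = false -> d (v i) Q <= d (v i) P).

(* Preference strength alpha_i^{AB} = d(i,B)/d(i,A) > tau, written without
   division: d(i,B) > tau * d(i,A)  (alpha = +infinity when d(i,A) = 0 < d(i,B),
   alpha = 1 when both distances are 0). *)
Definition wmr2_weight {X : Type} (d : X -> X -> R) (tau : R) (x A B : X) : R :=
  if Rlt_dec (tau * d x A) (d x B) then (tau + 1) / (tau - 1) else 1.

(* Weighted score of P: (tau+1)/(tau-1) |A_2| + |A_1| *)
Definition scoreP {X : Type} (d : X -> X -> R) (tau : R) (n : nat) (v : nat -> X)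
  (P Q : X) (prefP : nat -> bool) : R :=
  rsum n (fun i => if prefP i then wmr2_weight d tau (v i) P Q else 0).

(* Weighted score of Q: |B_1| + (tau+1)/(tau-1) |B_2| *)
Definition scoreQ {X : Type} (d : X -> X -> R) (tau : R) (n : nat) (v : nat -> X)
  (P Q : X) (prefP : nat -> bool) : R :=
  rsum n (fun i => if prefP i then 0 else wmr2_weight d tau (v i) Q P).

Definition wmr2_selects_P {X : Type} (d : X -> X -> R) (tau : R) (n : nat)
  (v : nat -> X) (P Q : X) (prefP : nat -> bool) : Prop :=
  scoreQ d tau n v P Q prefP <= scoreP d tau n v P Q prefP.

(* Main.v *)
Require Import Defs.
From Stdlib Require Import Reals Lra Lia Psatz.
Open Scope R_scope.

Lemma voter_bound (X : Type) (d : X -> X -> R) (Hd : metric X d) (tau c : R)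
  (Htau : 1 < tau) (Hc1 : (tau + 1) * c >= 3 * tau - 1) (Hc2 : tau * c >= tau + 2)
  (x P Q : X) (b : bool)
  (Hb : (b = true -> d x P <= d x Q) /\ (b = false -> d x Q <= d x P)) :
  (tau + 1) * (d x P - c * d x Q) <=
  (tau - 1) * d P Q * ((if b then 0 else wmr2_weight d tau x Q P)
                       - (if b then wmr2_weight d tau x P Q else 0)).
Proof.
  destruct Hb as [H1 H2].
  assert (Hp : 0 <= d x P) by apply (metric_nonneg _ _ Hd).
  assert (Hq : 0 <= d x Q) by apply (metric_nonneg _ _ Hd).
  assert (HD1 : d P Q <= d x P + d x Q).
  { rewrite (metric_sym _ _ Hd x P). apply (metric_tri _ _ Hd). }
  assert (HD2 : d x P <= d x Q + d P Q).
  { pose proof (metric_tri _ _ Hd x Q P). rewrite (metric_sym _ _ Hd Q P) in H. lra. }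
  assert (Hk : (tau - 1) * ((tau + 1) / (tau - 1)) = tau + 1) by (field; lra).
  unfold wmr2_weight.
  destruct b.
  - specialize (H1 eq_refl).
    destruct (Rlt_dec (tau * d x P) (d x Q)) as [Hs|Hs].
    + replace ((tau - 1) * d P Q * (0 - (tau + 1) / (tau - 1)))
        with (- ((tau - 1) * ((tau + 1) / (tau - 1))) * d P Q) by ring.
      rewrite Hk.
      assert (tau * (c * d x Q) >= tau * (d x Q + 2 * d x P)) by nra.
      assert (c * d x Q >= d x Q + 2 * d x P) by nra.
      nra.
    + nra.
  - specialize (H2 eq_refl).
    destruct (Rlt_dec (tau * d x Q) (d x P)) as [Hs|Hs].
    + replace ((tau - 1) * d P Q * ((tau + 1) / (tau - 1) - 0))
        with (((tau - 1) * ((tau + 1) / (tau - 1))) * d P Q) by ring.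
      rewrite Hk.
      assert (c >= 1) by nra.
      nra.
    + nra.
Qed.

Theorem mainTheorem4 (X : Type) (d : X -> X -> R) (Hd : metric X d)
  (tau : R) (Htau : 1 < tau) (n : nat) (v : nat -> X) (P Q : X)
  (prefP : nat -> bool) (Hcons : consistent d n v P Q prefP)
  (Hsel : wmr2_selects_P d tau n v P Q prefP) :
  SC d n v P <= Rmax ((3 * tau - 1) / (tau + 1)) ((tau + 2) / tau) * SC d n v Q.
Proof.
  set (c := Rmax ((3 * tau - 1) / (tau + 1)) ((tau + 2) / tau)).
  assert (Hc1 : (tau + 1) * c >= 3 * tau - 1).
  { assert (H := Rmax_l ((3 * tau - 1) / (tau + 1)) ((tau + 2) / tau)).
    fold c in H.
    assert ((tau + 1) * ((3 * tau - 1) / (tau + 1)) = 3 * tau - 1) by (field; lra).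
    nra. }
  assert (Hc2 : tau * c >= tau + 2).
  { assert (H := Rmax_r ((3 * tau - 1) / (tau + 1)) ((tau + 2) / tau)).
    fold c in H.
    assert (tau * ((tau + 2) / tau) = tau + 2) by (field; lra).
    nra. }
  assert (Hind : forall m, (m <= n)%nat ->
    (tau + 1) * (SC d m v P - c * SC d m v Q) <=
    (tau - 1) * d P Q * (scoreQ d tau m v P Q prefP - scoreP d tau m v P Q prefP)).
  { induction m as [|m IH]; intros Hm.
    - unfold SC, scoreQ, scoreP; simpl. lra.
    - unfold SC, scoreQ, scoreP in *; simpl.
      specialize (IH ltac:(lia)).
      pose proof (voter_bound X d Hd tau c Htau Hc1 Hc2 (v m) P Q (prefP m)
                    (Hcons m ltac:(lia))).
      nra. }
  specialize (Hind n (le_n n)).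
  unfold wmr2_selects_P in Hsel.
  assert (0 <= d P Q) by apply (metric_nonneg _ _ Hd).
  assert ((tau - 1) * d P Q * (scoreQ d tau n v P Q prefP - scoreP d tau n v P Q prefP) <= 0).
  { assert (0 <= (tau - 1) * d P Q) by nra. nra. }
  nra.
Qed.
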